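(* For every $n>1$, there exists a $\Pi^0_2$ equivalence relation $E$ on $\omega$ which is complete under $\leq_c^n$ among $\Pi^0_2$ equivalence relations, but is not complete under $\leq_c^{n+1}$ among $\Pi^0_2$ equivalence relations.
   Context: For equivalence relations $E,F$ on $\omega$ and $n\ge1$, $F\leq_c^nE$ means there is a total computable function mapping each $(x_0,\dots,x_{n-1})\in\omega^n$ to $(y_0,\dots,y_{n-1})\in\omega^n$ with $x_i\,F\,x_j\iff y_i\,E\,y_j$ for all $i<j<n$. $E$ is complete under $\leq_c^n$ among $\Pi^0_2$ equivalence relations if $E$ is a $\Pi^0_2$ subset of $\omega\times\omega$ and every $\Pi^0_2$ equivalence relation $F$ on $\omega$ satisfies $F\leq_c^nE$. *)

(* Defs.v *)
From mathcomp Require Import all_boot.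
Set Implicit Arguments. Unset Strict Implicit. Unset Printing Implicit Defensive.

(* Untyped syntax; arguments are lists of naturals. *)
Inductive rf : Type :=
| rZero : rf
| rSucc : rf
| rProj : nat -> rf               (* i-th argument (0-based) *)
| rComp : rf -> list rf -> rf
| rPrec : rf -> rf -> rf          (* primitive recursion on the first arg *)
| rMu   : rf -> rf.               (* unbounded minimization on the first arg *)

Inductive eval : rf -> seq nat -> nat -> Prop :=
| ev_zero v : eval rZero v 0
| ev_succ x v : eval rSucc (x :: v) x.+1
| ev_proj i v : i < size v -> eval (rProj i) v (nth 0 v i)
| ev_comp f gs v ws y : evals gs v ws -> eval f ws y -> eval (rComp f gs) v y
| ev_prec0 f g v y : eval f v y -> eval (rPrec f g) (0 :: v) y
| ev_precS f g k v z y :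
    eval (rPrec f g) (k :: v) z -> eval g (k :: z :: v) y ->
    eval (rPrec f g) (k.+1 :: v) y
| ev_mu f v k :
    eval f (k :: v) 0 ->
    (forall m, m < k -> exists r, eval f (m :: v) r.+1) ->
    eval (rMu f) v k
with evals : list rf -> seq nat -> seq nat -> Prop :=
| evs_nil v : evals nil v [::]
| evs_cons g gs v w ws : eval g v w -> evals gs v ws -> evals (g :: gs) v (w :: ws).

Definition computable_n (n : nat) (F : seq nat -> nat) : Prop :=
  exists p : rf, forall v : seq nat, size v = n -> eval p v (F v).

Definition Pi02 (A : nat -> nat -> Prop) : Prop :=
  exists R : nat -> nat -> nat -> nat -> bool,
    computable_n 4 (fun v => nat_of_bool (R (nth 0 v 0) (nth 0 v 1) (nth 0 v 2) (nth 0 v 3)))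
    /\ forall x y, A x y <-> (forall u, exists w, R x y u w).

Definition is_equivalence (E : nat -> nat -> Prop) : Prop :=
  (forall x, E x x) /\ (forall x y, E x y -> E y x)
  /\ (forall x y z, E x y -> E y z -> E x z).

(* F <=_c^n E : a total computable map omega^n -> omega^n, given by its n
   components f 0, ..., f (n-1) (each a total computable function of n
   arguments), such that x_i F x_j <-> y_i E y_j for all i < j < n. *)
Definition creduces_n (n : nat) (F E : nat -> nat -> Prop) : Prop :=
  exists f : nat -> seq nat -> nat,
    (forall i, i < n -> computable_n n (f i)) /\
    forall v : seq nat, size v = n ->
      forall i j, i < j -> j < n ->
        (F (nth 0 v i) (nth 0 v j) <-> E (f i v) (f j v)).

Definition complete_n (n : nat) (E : nat -> nat -> Prop) : Prop :=
  Pi02 E /\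
  forall F : nat -> nat -> Prop, is_equivalence F -> Pi02 F -> creduces_n n F E.

(* Main.v *)
Require Import Defs.
From mathcomp Require Import all_boot zify.
From Stdlib Require FunctionalExtensionality.
From Stdlib Require Import Classical.
Set Implicit Arguments. Unset Strict Implicit. Unset Printing Implicit Defensive.

Notation C := computable_n.

Lemma C_ext k F G : (forall v, size v = k -> F v = G v) -> C k G -> C k F.
Proof. move=> H [p Hp]; exists p => v Hv; rewrite H //; exact: Hp. Qed.

Fixpoint Call k (Gs : seq (seq nat -> nat)) : Prop :=
  if Gs is G :: Gs' then C k G /\ Call k Gs' else True.

Lemma C_comp k m F Gs : size Gs = m -> C m F -> Call k Gs ->
  C k (fun v => F [seq G v | G <- Gs]).
Proof.
move=> Hs [f Hf] HG.
have [gs Hgs] : exists gs, forall v, size v = k -> evals gs v [seq G v | G <- Gs].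
  elim: Gs HG {Hs} => [|G Gs IH] /= => [_|[[g Hg] /IH [gs Hgs]]].
    by exists nil => v _; constructor.
  by exists (g :: gs) => v Hv; constructor; [exact: Hg | exact: Hgs].
exists (rComp f gs) => v Hv; econstructor; first exact: Hgs.
by apply: Hf; rewrite size_map.
Qed.

Lemma C_const k c : C k (fun _ => c).
Proof.
elim: c => [|c [p Hp]]; first by exists rZero => v _; constructor.
exists (rComp rSucc [:: p]) => v Hv; econstructor.
  by constructor; [exact: Hp | constructor].
constructor.
Qed.

Lemma C_proj k i : i < k -> C k (fun v => nth 0 v i).
Proof. move=> H; exists (rProj i) => v Hv; constructor; by rewrite Hv. Qed.

Lemma C_succ k F : C k F -> C k (fun v => (F v).+1).
Proof.
move=> [p Hp]; exists (rComp rSucc [:: p]) => v Hv; econstructor.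
  by constructor; [exact: Hp | constructor].
constructor.
Qed.

Fixpoint prec (F : seq nat -> nat) (G : seq nat -> nat) (x : nat) (v : seq nat) :=
  if x is k.+1 then G (k :: prec F G k v :: v) else F v.

Lemma C_prec k F G : C k F -> C k.+2 G ->
  C k.+1 (fun v => prec F G (head 0 v) (behead v)).
Proof.
move=> [f Hf] [g Hg]; exists (rPrec f g) => [[|x v]] //= [Hv].
elim: x => [|x IH] /=; first by constructor; apply: Hf.
econstructor; first exact: IH.
by apply: Hg; rewrite /= Hv.
Qed.

Lemma Call_proj k (idx : seq nat) : all (fun i => i < k) idx ->
  Call k [seq (fun v => nth 0 v i) | i <- idx].
Proof.
elim: idx => //= i idx IH /andP[Hi Ha]; split; [exact: C_proj | exact: IH].
Qed.

Lemma C_idx k m F (idx : seq nat) : size idx = m -> all (fun i => i < k) idx ->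
  C m F -> C k (fun v => F [seq nth 0 v i | i <- idx]).
Proof.
move=> Hs Ha HF.
have := @C_comp k m F [seq (fun v => nth 0 v i) | i <- idx].
rewrite size_map Hs => /(_ erefl HF) H.
apply: (C_ext _ (H _)) => [v _|]; first by rewrite -map_comp.
move=> {HF Hs H}; elim: idx Ha => //= i idx IH /andP[Hi Ha]; split; last exact: IH.
exact: C_proj.
Qed.

Lemma C_op1 k (op : nat -> nat) F : C 1 (fun v => op (nth 0 v 0)) -> C k F ->
  C k (fun v => op (F v)).
Proof.
move=> Hop HF; have := @C_comp k 1 _ [:: F] erefl Hop; apply => //.
Qed.

Lemma C_op2 k (op : nat -> nat -> nat) F G :
  C 2 (fun v => op (nth 0 v 0) (nth 0 v 1)) -> C k F -> C k G ->
  C k (fun v => op (F v) (G v)).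
Proof.
move=> Hop HF HG; have := @C_comp k 2 _ [:: F; G] erefl Hop; apply => //.
Qed.

Lemma C_op3 k (op : nat -> nat -> nat -> nat) F G H :
  C 3 (fun v => op (nth 0 v 0) (nth 0 v 1) (nth 0 v 2)) -> C k F -> C k G -> C k H ->
  C k (fun v => op (F v) (G v) (H v)).
Proof.
move=> Hop HF HG HH; have := @C_comp k 3 _ [:: F; G; H] erefl Hop; apply => //.
Qed.

Lemma C_add2 : C 2 (fun v => nth 0 v 0 + nth 0 v 1).
Proof.
have := @C_prec 1 (fun v => nth 0 v 0) (fun u => (nth 0 u 1).+1)
  (@C_proj 1 0 isT) (C_succ (@C_proj 3 1 isT)).
apply: C_ext => [[|x [|y [|]]]] //= _.
by elim: x => //= x <-.
Qed.

Lemma C_add k F G : C k F -> C k G -> C k (fun v => F v + G v).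
Proof. exact: C_op2 C_add2. Qed.

Lemma C_mul2 : C 2 (fun v => nth 0 v 0 * nth 0 v 1).
Proof.
have := @C_prec 1 (fun v => 0) (fun u => nth 0 u 1 + nth 0 u 2)
  (C_const _ _) (C_add (@C_proj 3 1 isT) (@C_proj 3 2 isT)).
apply: C_ext => [[|x [|y [|]]]] //= _.
by elim: x => //= x <-; rewrite mulSn addnC.
Qed.

Lemma C_mul k F G : C k F -> C k G -> C k (fun v => F v * G v).
Proof. exact: C_op2 C_mul2. Qed.

Lemma C_pred k F : C k F -> C k (fun v => (F v).-1).
Proof.
apply: C_op1.
have := @C_prec 0 (fun v => 0) (fun u => nth 0 u 0) (C_const _ _) (@C_proj 2 0 isT).
apply: C_ext => [[|x [|]]] //= _; by case: x.
Qed.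

Lemma C_sub k F G : C k F -> C k G -> C k (fun v => F v - G v).
Proof.
apply: C_op2.
have H := @C_prec 1 (fun v => nth 0 v 0) (fun u => (nth 0 u 1).-1)
  (@C_proj 1 0 isT) (C_pred (@C_proj 3 1 isT)).
have := @C_idx 2 2 _ [:: 1; 0] erefl erefl H.
apply: C_ext => [[|x [|y [|]]]] //= _.
by elim: y => [|y /= <-]; rewrite ?subn0 ?subnS.
Qed.

Lemma C_iz k F : C k F -> C k (fun v => nat_of_bool (F v == 0)).
Proof.
apply: (@C_op1 k (fun x => nat_of_bool (x == 0))).
have := @C_prec 0 (fun v => 1) (fun u => 0) (C_const _ _) (C_const _ _).
apply: C_ext => [[|x [|]]] //= _; by case: x.
Qed.

Definition CB k (b : seq nat -> bool) := C k (fun v => nat_of_bool (b v)).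

Lemma CB_C k b : CB k b -> C k (fun v => nat_of_bool (b v)). Proof. by []. Qed.

Lemma CB_eq k F G : C k F -> C k G -> CB k (fun v => F v == G v).
Proof.
move=> HF HG; have := C_iz (C_add (C_sub HF HG) (C_sub HG HF)).
apply: C_ext => v _; congr nat_of_bool.
by rewrite addn_eq0 !subn_eq0 eqn_leq.
Qed.

Lemma CB_le k F G : C k F -> C k G -> CB k (fun v => F v <= G v).
Proof.
move=> HF HG; have := C_iz (C_sub HF HG).
apply: C_ext => v _; by rewrite subn_eq0.
Qed.

Lemma CB_lt k F G : C k F -> C k G -> CB k (fun v => F v < G v).
Proof. move=> HF HG; exact: CB_le (C_succ HF) HG. Qed.

Lemma CB_not k b : CB k b -> CB k (fun v => ~~ b v).
Proof. move=> H; have := C_iz H; apply: C_ext => v _; by case: (b v). Qed.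

Lemma CB_and k b c : CB k b -> CB k c -> CB k (fun v => b v && c v).
Proof. move=> H1 H2; have := C_mul H1 H2; apply: C_ext => v _; by case: (b v); case: (c v). Qed.

Lemma CB_or k b c : CB k b -> CB k c -> CB k (fun v => b v || c v).
Proof.
move=> H1 H2; have := CB_not (CB_and (CB_not H1) (CB_not H2)).
apply: C_ext => v _; by case: (b v); case: (c v).
Qed.

Lemma CB_impl k b c : CB k b -> CB k c -> CB k (fun v => b v ==> c v).
Proof.
move=> H1 H2; have := CB_or (CB_not H1) H2.
apply: C_ext => v _; by case: (b v); case: (c v).
Qed.

Lemma CB_true k : CB k (fun _ => true). Proof. exact: C_const. Qed.
Lemma CB_false k : CB k (fun _ => false). Proof. exact: C_const. Qed.

Lemma C_if k b F G : CB k b -> C k F -> C k G -> C k (fun v => if b v then F v else G v).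
Proof.
move=> Hb HF HG; have := C_add (C_mul Hb HF) (C_mul (CB_not Hb) HG).
apply: C_ext => v _; case: (b v) => /=; lia.
Qed.

Lemma CB_if k b c d : CB k b -> CB k c -> CB k d -> CB k (fun v => if b v then c v else d v).
Proof.
move=> Hb Hc Hd; have := C_if Hb Hc Hd; apply: C_ext => v _; by case: (b v).
Qed.

Fixpoint bsum (n : nat) (F : nat -> nat) : nat :=
  if n is m.+1 then bsum m F + F m else 0.

Lemma C_bsum k B F : C k B -> C k.+1 F ->
  C k (fun v => bsum (B v) (fun i => F (i :: v))).
Proof.
move=> HB HF.
have HG : C k.+2 (fun u => nth 0 u 1 + F (nth 0 u 0 :: drop 2 u)).
  apply: C_add; first exact: C_proj.
  have H := @C_idx k.+2 k.+1 F (0 :: iota 2 k).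
  rewrite /= size_iota in H.
  have {}H := H erefl.
  have Ha : all (fun i => i < k.+2) (iota 2 k) by apply/allP => i; rewrite mem_iota; lia.
  have {H} := H Ha HF.
  apply: C_ext => u Hu; congr F; congr (_ :: _).
  apply: (@eq_from_nth _ 0); first by rewrite size_drop Hu size_map size_iota subn2.
  move=> i; rewrite size_drop Hu => Hi; rewrite (nth_map 0) ?size_iota; last lia.
  rewrite nth_iota ?nth_drop; [congr nth; lia | lia].
have HP := C_prec (C_const k 0) HG.
have := @C_comp k k.+1 _ (B :: [seq (fun v => nth 0 v i) | i <- iota 0 k]) _ HP.
rewrite /= size_map size_iota => /(_ erefl) H.
apply: C_ext (H _) => [v Hv|]; last first.
  split => //; apply: Call_proj; apply/allP => i; rewrite mem_iota; lia.
have -> : [seq G v | G <- [seq (fun v0 => nth 0 v0 i) | i <- iota 0 k]] = v.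
  rewrite -map_comp; apply: (@eq_from_nth _ 0); rewrite size_map size_iota ?Hv // => i Hi.
  by rewrite (nth_map 0) ?size_iota // nth_iota.
rewrite /=; elim: (B v) => //= m ->; by rewrite drop0.
Qed.

Definition bex n (P : nat -> bool) := 0 < bsum n (fun i => nat_of_bool (P i)).
Definition ball n (P : nat -> bool) := bsum n (fun i => nat_of_bool (~~ P i)) == 0.

Lemma bexP n (P : nat -> bool) : reflect (exists2 i, i < n & P i) (bex n P).
Proof.
rewrite /bex; apply: (iffP idP).
- elim: n => //= n IH; rewrite addn_gt0 => /orP[/IH [i Hi Pi]|].
    by exists i => //; lia.
  by case Pn: (P n) => //= _; exists n.
- case=> i Hi Pi; elim: n Hi => //= n IH Hi; rewrite addn_gt0.
  case: (ltngtP i n) => H; first by rewrite IH.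
    lia.
  by rewrite -H Pi orbT.
Qed.

Lemma ballP n (P : nat -> bool) : reflect (forall i, i < n -> P i) (ball n P).
Proof.
rewrite /ball; elim: n => [|n IH] /=; first by constructor.
rewrite addn_eq0; apply: (iffP andP) => [[/IH Ha Hn] i Hi|Ha].
  case: (ltngtP i n) => H; [exact: Ha| lia | by move: Hn; rewrite H; case: (P n)].
split; first by apply/IH => i Hi; apply: Ha; lia.
by rewrite Ha.
Qed.

Lemma CB_bex k B P : C k B -> CB k.+1 P -> CB k (fun v => bex (B v) (fun i => P (i :: v))).
Proof.
move=> HB HP.
exact: (@CB_lt k (fun _ => 0) (fun v => bsum (B v) (fun i => nat_of_bool (P (i :: v))))
   (C_const _ _) (C_bsum HB HP)).
Qed.

Lemma CB_ball k B P : C k B -> CB k.+1 P -> CB k (fun v => ball (B v) (fun i => P (i :: v))).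
Proof.
move=> HB HP.
exact: (@CB_eq k (fun v => bsum (B v) (fun i => nat_of_bool (~~ P (i :: v)))) (fun _ => 0)
   (C_bsum HB (CB_not HP)) (C_const _ _)).
Qed.

Lemma C_proj_ext k n F : (forall w, F w = nth 0 w n) -> n < k -> C k F.
Proof. move=> H Hn; apply: C_ext (C_proj Hn) => w _; exact: H. Qed.

Lemma C_bsum' k B (F : nat -> seq nat -> nat) : C k B -> C k.+1 (fun w => F (head 0 w) (behead w)) ->
  C k (fun v => bsum (B v) (fun i => F i v)).
Proof. move=> HB HF; exact: C_bsum HB HF. Qed.

Lemma CB_bex' k B (P : nat -> seq nat -> bool) : C k B -> CB k.+1 (fun w => P (head 0 w) (behead w)) ->
  CB k (fun v => bex (B v) (fun i => P i v)).
Proof. move=> HB HP; exact: CB_bex HB HP. Qed.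

Lemma CB_ball' k B (P : nat -> seq nat -> bool) : C k B -> CB k.+1 (fun w => P (head 0 w) (behead w)) ->
  CB k (fun v => ball (B v) (fun i => P i v)).
Proof. move=> HB HP; exact: CB_ball HB HP. Qed.

Fixpoint T s := if s is m.+1 then T m + m.+1 else 0.
Definition pr x y := T (x + y) + y.

Lemma T_ge s : s <= T s. Proof. elim: s => //= s IH; lia. Qed.
Lemma T_mono s s' : s < s' -> T s + s < T s'.
Proof.
elim: s' => // s' IH; rewrite ltnS leq_eqVlt => /orP[/eqP->|/IH] /=; lia.
Qed.

Lemma pr_inj x y x' y' : pr x y = pr x' y' -> x = x' /\ y = y'.
Proof.
rewrite /pr => H.
case: (ltngtP (x + y) (x' + y')) => Hs.
- have := T_mono Hs; lia.
- have := T_mono Hs; lia.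
- rewrite Hs in H; lia.
Qed.

Lemma pr_ge1 x y : x <= pr x y. Proof. rewrite /pr; have := T_ge (x + y); lia. Qed.
Lemma pr_ge2 x y : y <= pr x y. Proof. rewrite /pr; lia. Qed.

Lemma pr_surj z : exists x y, pr x y = z.
Proof.
elim: z => [|z [x [y <-]]]; first by exists 0, 0.
case: x => [|x].
  by exists y.+1, 0; rewrite /pr /= !addn0 add0n; lia.
exists x, y.+1; rewrite /pr; have -> : x + y.+1 = x.+1 + y by lia.
rewrite /=; lia.
Qed.

Lemma bsum_ext n F G : (forall i, i < n -> F i = G i) -> bsum n F = bsum n G.
Proof. elim: n => //= n IH H; rewrite IH ?H //=; move=> i Hi; apply: H; lia. Qed.

Lemma bsum_zero n F : (forall i, i < n -> F i = 0) -> bsum n F = 0.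
Proof. elim: n => //= n IH H; rewrite IH ?H //=; move=> i Hi; apply: H; lia. Qed.

Lemma bsum_single n F i0 : i0 < n -> (forall i, i < n -> i != i0 -> F i = 0) -> bsum n F = F i0.
Proof.
elim: n => //= n IH Hi0 H; case: (ltngtP i0 n) => Hn.
- rewrite IH //; last by move=> i Hi; apply: H; lia.
  rewrite (H n) ?addn0 //; apply/eqP; lia.
- lia.
- rewrite bsum_zero ?Hn //; move=> i Hi; apply: H; [lia | apply/eqP; lia].
Qed.

Definition p1 z := bsum z.+1 (fun i => bsum z.+1 (fun j => if pr i j == z then i else 0)).
Definition p2 z := bsum z.+1 (fun i => bsum z.+1 (fun j => if pr i j == z then j else 0)).

Lemma p1_pr x y : p1 (pr x y) = x.
Proof.
rewrite /p1 (@bsum_single _ _ x); last 2 first.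
- have := pr_ge1 x y; lia.
- move=> i _ Hi; apply: bsum_zero => j _; case: eqP => // /pr_inj [E _].
  by move: Hi; rewrite E eqxx.
rewrite (@bsum_single _ _ y) ?eqxx //.
- have := pr_ge2 x y; lia.
- by move=> j _ Hj; case: eqP => // /pr_inj [_ E]; move: Hj; rewrite E eqxx.
Qed.

Lemma p2_pr x y : p2 (pr x y) = y.
Proof.
rewrite /p2 (@bsum_single _ _ x); last 2 first.
- have := pr_ge1 x y; lia.
- move=> i _ Hi; apply: bsum_zero => j _; case: eqP => // /pr_inj [E _].
  by move: Hi; rewrite E eqxx.
rewrite (@bsum_single _ _ y) ?eqxx //.
- have := pr_ge2 x y; lia.
- by move=> j _ Hj; case: eqP => // /pr_inj [_ E]; move: Hj; rewrite E eqxx.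
Qed.

Lemma pr_p z : pr (p1 z) (p2 z) = z.
Proof. by case: (pr_surj z) => x [y <-]; rewrite p1_pr p2_pr. Qed.

Lemma p1_le z : p1 z <= z. Proof. rewrite -{2}(pr_p z); exact: pr_ge1. Qed.
Lemma p2_le z : p2 z <= z. Proof. rewrite -{2}(pr_p z); exact: pr_ge2. Qed.

Ltac cproj := apply: C_proj_ext; [move=> ?; rewrite /= -?nth0 ?nth_behead; reflexivity | by []].

Lemma C_T k F : C k F -> C k (fun v => T (F v)).
Proof.
apply: C_op1.
have := @C_prec 0 (fun _ => 0) (fun u => nth 0 u 1 + (nth 0 u 0).+1) (C_const _ _)
  (C_add (@C_proj 2 1 isT) (C_succ (@C_proj 2 0 isT))).
apply: C_ext => [[|x [|]]] //= _; by elim: x => //= x <-.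
Qed.

Lemma C_pr k F G : C k F -> C k G -> C k (fun v => pr (F v) (G v)).
Proof. move=> HF HG; rewrite /pr; exact: C_add (C_T (C_add HF HG)) HG. Qed.

Ltac cstep_ext := fail.
Ltac cstep := first [ cstep_ext |
  match goal with
  | |- C _ (fun v => nat_of_bool (_ && _)) => apply: CB_and
  | |- C _ (fun v => nat_of_bool (_ || _)) => apply: CB_or
  | |- C _ (fun v => nat_of_bool (_ ==> _)) => apply: CB_impl
  | |- C _ (fun v => nat_of_bool (~~ _)) => apply: CB_not
  | |- C _ (fun v => nat_of_bool (_ == _)) => apply: CB_eq
  | |- C _ (fun v => nat_of_bool (_ <= _)) => apply: CB_le
  | |- C _ (fun v => nat_of_bool (if _ then _ else _)) => apply: CB_if
  | |- C _ (fun v => nat_of_bool (bex _ _)) => apply: CB_bex'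
  | |- C _ (fun v => nat_of_bool (ball _ _)) => apply: CB_ball'
  | |- C _ (fun v => nat_of_bool true) => apply: CB_true
  | |- C _ (fun v => nat_of_bool false) => apply: CB_false
  | |- C _ (fun v => if _ then _ else _) => apply: C_if
  | |- C _ (fun v => _ + _) => apply: C_add
  | |- C _ (fun v => _ * _) => apply: C_mul
  | |- C _ (fun v => _ - _) => apply: C_sub
  | |- C _ (fun v => _.+1) => apply: C_succ
  | |- C _ (fun v => _.-1) => apply: C_pred
  | |- C _ (fun v => pr _ _) => apply: C_pr
  | |- C _ (fun v => bsum _ _) => apply: C_bsum'
  | |- C _ (fun v => nth 0 _ _) => cproj
  | |- C _ (fun v => head 0 _) => cproj
  | |- C _ (head 0) => cproj
  | |- C _ (nth 0) => cproj
  | |- C _ (fun v => _) => apply: C_const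
  end ].

Ltac cauto := repeat (rewrite /CB; cstep).

Lemma C_shift k c : C k c -> C k.+1 (fun w => c (behead w)).
Proof.
move=> H; have := @C_idx k.+1 k c (iota 1 k); rewrite size_iota => /(_ erefl).
have Ha : all (fun i => i < k.+1) (iota 1 k) by apply/allP => i; rewrite mem_iota; lia.
move=> /(_ Ha H); apply: C_ext => w Hw; congr c.
apply: (@eq_from_nth _ 0) => [|i]; rewrite ?size_behead ?size_map ?size_iota ?Hw // => Hi.
by rewrite nth_behead (nth_map 0) ?size_iota // nth_iota // add1n.
Qed.

Lemma C_sub0 k (F : nat -> seq nat -> nat) G :
  C k.+1 (fun w => F (head 0 w) (behead w)) -> C k.+1 G ->
  C k.+1 (fun w => F (G w) (behead w)).
Proof.
move=> HF HG.
have := @C_comp k.+1 k.+1 (fun w => F (head 0 w) (behead w)) (G :: [seq (fun v => nth 0 v i) | i <- iota 1 k]).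
rewrite /= size_map size_iota => /(_ erefl HF) H.
apply: C_ext (H _) => [w Hw|]; last first.
  split => //; apply: Call_proj; apply/allP => i; rewrite mem_iota; lia.
congr F; rewrite -map_comp; apply: (@eq_from_nth _ 0) => [|i]; rewrite ?size_behead ?size_map ?size_iota ?Hw // => Hi.
by rewrite nth_behead (nth_map 0) ?size_iota // nth_iota // add1n.
Qed.

Lemma C_p1 k F : C k F -> C k (fun v => p1 (F v)).
Proof. apply: C_op1; rewrite /p1; cauto. Qed.
Lemma C_p2 k F : C k F -> C k (fun v => p2 (F v)).
Proof. apply: C_op1; rewrite /p2; cauto. Qed.

Definition cons_ h t := (pr h t).+1.
Definition hd c := p1 c.-1.
Definition tl c := p2 c.-1.
Fixpoint cs (s : seq nat) : nat := if s is x :: s' then cons_ x (cs s') else 0.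
Definition nthc k c := hd (iter k tl c).

Lemma p1_0 : p1 0 = 0. Proof. by rewrite -[0]/(pr 0 0) p1_pr. Qed.
Lemma p2_0 : p2 0 = 0. Proof. by rewrite -[0]/(pr 0 0) p2_pr. Qed.
Lemma hd0 : hd 0 = 0. Proof. exact: p1_0. Qed.
Lemma tl0 : tl 0 = 0. Proof. exact: p2_0. Qed.
Lemma hd_cons h t : hd (cons_ h t) = h. Proof. by rewrite /hd /cons_ /= p1_pr. Qed.
Lemma tl_cons h t : tl (cons_ h t) = t. Proof. by rewrite /tl /cons_ /= p2_pr. Qed.
Lemma cons_inj h t h' t' : cons_ h t = cons_ h' t' -> h = h' /\ t = t'.
Proof. by rewrite /cons_ => -[] /pr_inj. Qed.
Lemma cons_neq0 h t : cons_ h t != 0. Proof. by []. Qed.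
Lemma tl_le c : tl c <= c. Proof. rewrite /tl; have := p2_le c.-1; lia. Qed.
Lemma tl_lt c : c != 0 -> tl c < c. Proof. rewrite /tl; have := p2_le c.-1; lia. Qed.

Lemma iter_tl0 k : iter k tl 0 = 0. Proof. by elim: k => //= k ->; rewrite tl0. Qed.

Lemma iter_tl_cs k s : iter k tl (cs s) = cs (drop k s).
Proof.
elim: k s => [|k IH] [|x s] //=; first by rewrite iter_tl0.
by rewrite -iterS iterSr tl_cons IH.
Qed.

Lemma nthc_cs k s : nthc k (cs s) = nth 0 s k.
Proof.
rewrite /nthc iter_tl_cs; case: (ltnP k (size s)) => H.
  by rewrite (drop_nth 0 H) /= hd_cons.
by rewrite drop_oversize // nth_default //= hd0.
Qed.

Lemma cs_eq0 s : (cs s == 0) = (s == [::]). Proof. by case: s. Qed.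

Lemma cs_inj s t : cs s = cs t -> s = t.
Proof.
elim: s t => [|x s IH] [|y t] //= /cons_inj [-> /IH ->] //.
Qed.

Lemma size_le_cs s : size s <= cs s.
Proof.
elim: s => //= x s IH; rewrite /cons_; have := pr_ge2 x (cs s); lia.
Qed.

Lemma iter_tl_le k c : iter k tl c != 0 -> k + iter k tl c <= c.
Proof.
elim: k => [|k IH] /= H; first lia.
have H1 : iter k tl c != 0 by apply: contraNneq H => ->; rewrite tl0.
have := IH H1; have := tl_lt H1; lia.
Qed.

Definition exlc (Q : nat -> bool) c := bex c.+1 (fun i => (iter i tl c != 0) && Q (nthc i c)).

Lemma exlc_cs Q s : exlc Q (cs s) = has Q s.
Proof.
apply/bexP/hasP => [[i Hi /andP[Hne HQ]]|[x Hx HQ]].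
  rewrite iter_tl_cs nthc_cs in Hne HQ.
  have Hs : i < size s by move: Hne; rewrite cs_eq0 -size_eq0 size_drop subn_eq0 -ltnNge.
  by exists (nth 0 s i) => //; apply: mem_nth.
have H : index x s < size s by rewrite index_mem.
exists (index x s); first by have := size_le_cs s; lia.
rewrite iter_tl_cs nthc_cs nth_index // HQ andbT cs_eq0 -size_eq0 size_drop subn_eq0 -ltnNge //.
Qed.

Definition memc x c := exlc (fun q => q == x) c.
Lemma memc_cs x s : memc x (cs s) = (x \in s).
Proof. by rewrite /memc exlc_cs; apply/hasP/idP => [[y Hy /eqP <-]|H] //; exists x. Qed.

Lemma C_iter_tl k F G : C k F -> C k G -> C k (fun v => iter (F v) tl (G v)).
Proof.
move=> HF HG; apply: (@C_op2 k (fun a b => iter a tl b)) => //.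
have := @C_prec 1 (fun v => nth 0 v 0) (fun u => tl (nth 0 u 1)) (@C_proj 1 0 isT)
  (@C_p2 3 (fun u => (nth 0 u 1).-1) (C_pred (@C_proj 3 1 isT))).
apply: C_ext => [[|x [|y [|]]]] //= _.
by elim: x => //= x ->.
Qed.

Lemma C_hd k F : C k F -> C k (fun v => hd (F v)).
Proof. move=> H; exact: C_p1 (C_pred H). Qed.
Lemma C_tl k F : C k F -> C k (fun v => tl (F v)).
Proof. move=> H; exact: C_p2 (C_pred H). Qed.
Lemma C_cons k F G : C k F -> C k G -> C k (fun v => cons_ (F v) (G v)).
Proof. move=> H1 H2; exact: C_succ (C_pr H1 H2). Qed.
Lemma C_nthc k F G : C k F -> C k G -> C k (fun v => nthc (F v) (G v)).
Proof. move=> H1 H2; exact: C_hd (C_iter_tl H1 H2). Qed.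

Lemma CB_exlc k c (Q : nat -> seq nat -> bool) : C k c ->
  CB k.+1 (fun w => Q (head 0 w) (behead w)) ->
  CB k (fun v => exlc (fun q => Q q v) (c v)).
Proof.
move=> Hc HQ; rewrite /exlc; apply: CB_bex'; first exact: C_succ.
apply: CB_and.
  apply: CB_not; apply: CB_eq; last exact: C_const.
  apply: C_iter_tl; first by cproj.
  exact: C_shift.
have := @C_sub0 k (fun a b => nat_of_bool (Q a b)) (fun w => nthc (head 0 w) (c (behead w))) HQ.
apply; apply: C_nthc; [cproj | exact: C_shift].
Qed.

Lemma CB_memc k F c : C k F -> C k c -> CB k (fun v => memc (F v) (c v)).
Proof.
move=> HF Hc; rewrite /memc.
apply: (@CB_exlc k c (fun q v => q == F v)) => //.
apply: CB_eq; [cproj | exact: C_shift].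
Qed.

Ltac cstep_ext ::=
  match goal with
  | |- C _ (fun v => p1 _) => apply: C_p1
  | |- C _ (fun v => p2 _) => apply: C_p2
  | |- C _ (fun v => hd _) => apply: C_hd
  | |- C _ (fun v => tl _) => apply: C_tl
  | |- C _ (fun v => cons_ _ _) => apply: C_cons
  | |- C _ (fun v => nthc _ _) => apply: C_nthc
  | |- C _ (fun v => iter _ tl _) => apply: C_iter_tl
  | |- C _ (fun v => nat_of_bool (memc _ _)) => apply: CB_memc
  | |- C _ (fun v => nat_of_bool (exlc _ _)) => apply: CB_exlc
  end.

Definition J t a b y := pr t (pr a (pr b y)).
Definition jt j := p1 j.
Definition ja j := p1 (p2 j).
Definition jb j := p1 (p2 (p2 j)).
Definition jy j := p2 (p2 (p2 j)).
Lemma J_proj t a b y : [/\ jt (J t a b y) = t, ja (J t a b y) = a, jb (J t a b y) = b & jy (J t a b y) = y].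
Proof. by rewrite /jt /ja /jb /jy /J !p2_pr !p1_pr. Qed.
Lemma J_eta j : J (jt j) (ja j) (jb j) (jy j) = j.
Proof. by rewrite /J /jt /ja /jb /jy !pr_p. Qed.

Fixpoint code (p : rf) : nat :=
  match p with
  | rZero => pr 0 0
  | rSucc => pr 1 0
  | rProj i => pr 2 i
  | rComp f gs => pr 3 (pr (code f) (cs (map code gs)))
  | rPrec f g => pr 4 (pr (code f) (code g))
  | rMu f => pr 5 (code f)
  end.

Definition just (ex : (nat -> bool) -> bool) (j : nat) : bool :=
 ((jt j == 0) && (
   ((ja j == pr 0 0) && (jy j == 0))
|| ((ja j == pr 1 0) && (jb j != 0) && (jy j == (hd (jb j)).+1))
|| ((p1 (ja j) == 2) && (iter (p2 (ja j)) tl (jb j) != 0) && (jy j == nthc (p2 (ja j)) (jb j)))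
|| ((p1 (ja j) == 3) && ex (fun q => (jt q == 1) && (ja q == p2 (p2 (ja j))) && (jb q == jb j)
        && ex (fun q' => q' == J 0 (p1 (p2 (ja j))) (jy q) (jy j))))
|| ((p1 (ja j) == 4) && (jb j != 0) && (hd (jb j) == 0)
        && ex (fun q => q == J 0 (p1 (p2 (ja j))) (tl (jb j)) (jy j)))
|| ((p1 (ja j) == 4) && (jb j != 0) && (hd (jb j) != 0)
        && ex (fun q => (jt q == 0) && (ja q == ja j) && (jb q == cons_ (hd (jb j)).-1 (tl (jb j)))
          && ex (fun q' => q' == J 0 (p2 (p2 (ja j))) (cons_ (hd (jb j)).-1 (cons_ (jy q) (tl (jb j)))) (jy j))))
|| ((p1 (ja j) == 5) && ex (fun q => q == J 0 (p2 (ja j)) (cons_ (jy j) (jb j)) 0)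
        && ball (jy j) (fun m => ex (fun q => (jt q == 0) && (ja q == p2 (ja j))
              && (jb q == cons_ m (jb j)) && (jy q != 0))))))
|| ((jt j == 1) && (
   ((ja j == 0) && (jy j == 0))
|| ((ja j != 0) && (jy j != 0) && ex (fun q => q == J 0 (hd (ja j)) (jb j) (hd (jy j)))
      && ex (fun q => q == J 1 (tl (ja j)) (jb j) (tl (jy j)))))).

Opaque just.

Fixpoint valid (s : seq nat) : bool :=
  if s is x :: s' then just (fun Q => has Q s') x && valid s' else true.

Definition justc j c := just (fun Q => exlc Q c) j.
Definition validc d := ball d.+1 (fun k => (iter k tl d != 0) ==> justc (hd (iter k tl d)) (tl (iter k tl d))).

Lemma just_ext ex1 ex2 j : (forall Q, ex1 Q = ex2 Q) -> just ex1 j = just ex2 j.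
Proof.
move=> H; have E : ex1 = ex2 by exact: (FunctionalExtensionality.functional_extensionality _ _ H).
by subst.
Qed.

Lemma validP s : reflect (forall k, k < size s -> just (fun Q => has Q (drop k.+1 s)) (nth 0 s k)) (valid s).
Proof.
elim: s => [|x s IH]; first by constructor.
rewrite [valid _]/=.
apply: (iffP andP) => [[Hx /IH Hs] k|H].
  case: k => [_|k Hk]; first by rewrite [drop _ _]/= drop0 [nth _ _ _]/=.
  exact: Hs.
split; first by have := H 0 isT; rewrite [drop _ _]/= drop0 [nth _ _ _]/=.
apply/IH => k Hk; exact: (H k.+1).
Qed.

Lemma validc_cs s : validc (cs s) = valid s.
Proof.
apply/ballP/validP => [H k Hk|H k Hk].
  have := H k; rewrite iter_tl_cs => /(_ _)/implyP.
  rewrite cs_eq0 -size_eq0 size_drop subn_eq0 -ltnNge Hk /justc.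
  have Hk' : k < (cs s).+1 by have := size_le_cs s; lia.
  move=> /(_ Hk' isT).
  rewrite (drop_nth 0 Hk) /= hd_cons tl_cons.
  by rewrite (just_ext _ (fun Q => exlc_cs Q (drop k.+1 s))).
apply/implyP; rewrite iter_tl_cs cs_eq0 -size_eq0 size_drop subn_eq0 -ltnNge => Hs.
rewrite (drop_nth 0 Hs) /= hd_cons tl_cons /justc.
by rewrite (just_ext _ (fun Q => exlc_cs Q (drop k.+1 s))); apply: H.
Qed.

Lemma CB_justc k F G : C k F -> C k G -> CB k (fun v => justc (F v) (G v)).
Proof.
move=> HF HG; apply: (@C_op2 k (fun a b => nat_of_bool (justc a b))) => //.
Transparent just. rewrite /justc /just /jt /ja /jb /jy /J. cauto.
Qed.
Opaque just.

Section Ind.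
Variables (P : rf -> seq nat -> nat -> Prop) (Q : list rf -> seq nat -> seq nat -> Prop).
Hypotheses
  (Hz : forall v, P rZero v 0)
  (Hs : forall x v, P rSucc (x :: v) x.+1)
  (Hp : forall i v, i < size v -> P (rProj i) v (nth 0 v i))
  (Hc : forall f gs v ws y, evals gs v ws -> Q gs v ws -> eval f ws y -> P f ws y -> P (rComp f gs) v y)
  (Hp0 : forall f g v y, eval f v y -> P f v y -> P (rPrec f g) (0 :: v) y)
  (HpS : forall f g k v z y, eval (rPrec f g) (k :: v) z -> P (rPrec f g) (k :: v) z ->
          eval g (k :: z :: v) y -> P g (k :: z :: v) y -> P (rPrec f g) (k.+1 :: v) y)
  (Hm : forall f v k, eval f (k :: v) 0 -> P f (k :: v) 0 ->
          (forall m, m < k -> exists r, eval f (m :: v) r.+1 /\ P f (m :: v) r.+1) ->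
          P (rMu f) v k)
  (Hn : forall v, Q nil v [::])
  (Hcons : forall g gs v w ws, eval g v w -> P g v w -> evals gs v ws -> Q gs v ws -> Q (g :: gs) v (w :: ws)).

Fixpoint eval_ind2 p v y (H : eval p v y) {struct H} : P p v y :=
  match H in eval p v y return P p v y with
  | ev_zero v => Hz v
  | ev_succ x v => Hs x v
  | ev_proj i v Hi => Hp Hi
  | ev_comp f gs v ws y H1 H2 => Hc H1 (evals_ind2 H1) H2 (eval_ind2 H2)
  | ev_prec0 f g v y H1 => Hp0 g H1 (eval_ind2 H1)
  | ev_precS f g k v z y H1 H2 => HpS H1 (eval_ind2 H1) H2 (eval_ind2 H2)
  | ev_mu f v k H1 H2 => Hm H1 (eval_ind2 H1)
      (fun m Hmk => match H2 m Hmk with ex_intro r Hr => ex_intro _ r (conj Hr (eval_ind2 Hr)) end)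
  end
with evals_ind2 gs v ws (H : evals gs v ws) {struct H} : Q gs v ws :=
  match H in evals gs v ws return Q gs v ws with
  | evs_nil v => Hn v
  | evs_cons g gs v w ws H1 H2 => Hcons H1 (eval_ind2 H1) H2 (evals_ind2 H2)
  end.

Lemma eval_evals_ind2 :
  (forall p v y, eval p v y -> P p v y) /\ (forall gs v ws, evals gs v ws -> Q gs v ws).
Proof. split; [exact: eval_ind2 | exact: evals_ind2]. Qed.
End Ind.

Lemma eval_det_all :
  (forall p v y, eval p v y -> forall y', eval p v y' -> y = y') /\
  (forall gs v ws, evals gs v ws -> forall ws', evals gs v ws' -> ws = ws').
Proof.
apply: eval_evals_ind2.
- by move=> v y' H; inversion H.
- by move=> x v y' H; inversion H.
- by move=> i v _ y' H; inversion H.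
- move=> f gs v ws y _ IH1 _ IH2 y' H; inversion H; subst.
  match goal with Hx : evals gs v ?w |- _ => have E := IH1 _ Hx end; subst.
  exact: IH2.
- move=> f g v y _ IH y' H; inversion H; subst; exact: IH.
- move=> f g k v z y _ IH1 _ IH2 y' H; inversion H; subst.
  match goal with Hx : eval (rPrec f g) (k :: v) ?w |- _ => have E := IH1 _ Hx end; subst.
  exact: IH2.
- move=> f v k _ IH1 IH2 k' H; inversion H; subst.
  case: (ltngtP k k') => Hk //.
  + match goal with Hx : forall m, is_true (m < k') -> _ |- _ => have [r Hr] := Hx _ Hk end.
    by have := IH1 _ Hr.
  + have [r [_ Hr]] := IH2 _ Hk.
    match goal with Hx : eval f (k' :: v) 0 |- _ => by have := Hr _ Hx end.
- by move=> v ws' H; inversion H.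
- move=> g gs v w ws _ IH1 _ IH2 ws' H; inversion H; subst.
  match goal with Hx : eval g v ?a, Hy : evals gs v ?b |- _ => by rewrite (IH1 _ Hx) (IH2 _ Hy) end.
Qed.

Lemma eval_det p v y y' : eval p v y -> eval p v y' -> y = y'.
Proof. move=> H; exact: ((proj1 eval_det_all) p v y H y'). Qed.

Lemma cons_eta c : c != 0 -> cons_ (hd c) (tl c) = c.
Proof. by case: c => // c _; rewrite /cons_ /hd /tl /= pr_p. Qed.

Lemma cs_surj c : exists s, cs s = c.
Proof.
elim: c {-2}c (leqnn c) => [|n IH] c Hc.
  by exists [::]; case: c Hc.
case: (eqVneq c 0) => [->|Hc0]; first by exists [::].
have [s Hs] := IH (tl c) (ltac:(have := tl_lt Hc0; lia)).
by exists (hd c :: s); rewrite /= Hs cons_eta.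
Qed.

Definition Good j :=
  (jt j = 0 -> forall p v, code p = ja j -> cs v = jb j -> eval p v (jy j)) /\
  (jt j = 1 -> forall gs v, cs (map code gs) = ja j -> cs v = jb j ->
     exists ws, cs ws = jy j /\ evals gs v ws).

Lemma GoodJ0 a b y : Good (J 0 a b y) -> forall p v, code p = a -> cs v = b -> eval p v y.
Proof.
case: (J_proj 0 a b y) => H1 H2 H3 H4 [G _] p v Hp Hv.
have := G H1 p v; rewrite H2 H3 H4; exact.
Qed.

Lemma GoodJ1 a b y : Good (J 1 a b y) -> forall gs v, cs (map code gs) = a -> cs v = b ->
  exists ws, cs ws = y /\ evals gs v ws.
Proof.
case: (J_proj 1 a b y) => H1 H2 H3 H4 [_ G] gs v Hp Hv.
have := G H1 gs v; rewrite H2 H3 H4; exact.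
Qed.

Lemma hasJ (s : seq nat) X : has (fun q => q == X) s -> X \in s.
Proof. by case/hasP => q Hq /eqP <-. Qed.

Transparent just.
Lemma just_good s j : just (fun Q => has Q s) j -> (forall q, q \in s -> Good q) -> Good j.
Proof.
rewrite /just => H G.
case/orP: H => [H|H]; case/andP: H => /eqP Ht H.
- split => [_ p v Hcp Hcv|]; last by rewrite Ht.
  case/orP: H => [H|/andP[/andP[/eqP Ha /hasJ Hm] /ballP Hall]]; last first.
    case: p Hcp => [||i|f g0|f g|f] /= Hcp; rewrite -Hcp p1_pr // in Ha.
    rewrite -Hcp p2_pr -Hcv in Hm Hall.
    constructor; first exact: (GoodJ0 (G _ Hm) (v := jy j :: v)).
    move=> m Hm'; have /hasP [q Hq /andP[/andP[/andP[/eqP Hqt /eqP Hqa] /eqP Hqb] Hqy]] := Hall m Hm'.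
    have [Gq _] := G q Hq.
    have Hev := Gq Hqt f (m :: v) (esym Hqa) (esym Hqb).
    exists (jy q).-1; by rewrite prednK // lt0n.
  case/orP: H => [H|/andP[/andP[/andP[/eqP Ha Hb] Hh] /hasP [q Hq /andP[/andP[/andP[/eqP Hqt /eqP Hqa] /eqP Hqb] /hasJ Hm]]]]; last first.
    case: p Hcp => [||i|f g0|f g|f] /= Hcp; rewrite -Hcp p1_pr // in Ha.
    rewrite -Hcp p2_pr p2_pr in Hm.
    case: v Hcv Hb Hh Hqb Hm => [<-//|x v /= <- _]; rewrite hd_cons tl_cons.
    case: x => // x _ Hqb Hm; rewrite /= in Hqb Hm.
    have [Gq _] := G q Hq.
    have Hev := Gq Hqt (rPrec f g) (x :: v) (etrans Hcp (esym Hqa)) (esym Hqb).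
    econstructor; first exact: Hev.
    exact: (GoodJ0 (G _ Hm) (v := x :: jy q :: v)).
  case/orP: H => [H|/andP[/andP[/andP[/eqP Ha Hb] /eqP Hh] /hasJ Hm]]; last first.
    case: p Hcp => [||i|f g0|f g|f] /= Hcp; rewrite -Hcp p1_pr // in Ha.
    rewrite -Hcp p2_pr p1_pr in Hm.
    case: v Hcv Hb Hh Hm => [<-//|x v /= <- _]; rewrite hd_cons tl_cons => -> Hm.
    constructor; exact: (GoodJ0 (G _ Hm)).
  case/orP: H => [H|/andP[/eqP Ha /hasP [q Hq /andP[/andP[/andP[/eqP Hqt /eqP Hqa] /eqP Hqb] /hasJ Hm]]]]; last first.
    case: p Hcp => [||i|f gs|f g|f] /= Hcp; rewrite -Hcp p1_pr // in Ha.
    rewrite -Hcp !p2_pr in Hqa; rewrite -Hcp p2_pr p1_pr in Hm.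
    have [_ Gq] := G q Hq.
    have [ws [Hws Hev]] := Gq Hqt gs v (esym Hqa) (etrans Hcv (esym Hqb)).
    econstructor; first exact: Hev.
    rewrite -Hws in Hm; exact: (GoodJ0 (G _ Hm)).
  case/orP: H => [H|/andP[/andP[/eqP Ha Hb] /eqP Hy]]; last first.
    rewrite Hy; case: p Hcp => [||i|f gs|f g|f] /= Hcp; rewrite -Hcp p1_pr // in Ha.
    rewrite -Hcp p2_pr -Hcv nthc_cs in Hb *.
    constructor; move: Hb; rewrite iter_tl_cs cs_eq0 -size_eq0 size_drop subn_eq0 -ltnNge //.
  case/orP: H => [/andP[/eqP Ha /eqP Hy]|/andP[/andP[/eqP Ha Hb] /eqP Hy]].
    rewrite Hy; case: p Hcp => [||i|f gs|f g|f] /=; rewrite Ha;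
      move/(f_equal p1); rewrite !p1_pr // => _; constructor.
  rewrite Hy; case: p Hcp => [||i|f gs|f g|f] /=; rewrite Ha;
    move/(f_equal p1); rewrite !p1_pr // => _.
  case: v Hcv Hb => [<-//|x v /= <- _]; rewrite hd_cons; constructor.
- split => [Ht0|_ gs v Hcg Hcv]; first by rewrite Ht in Ht0.
  case/orP: H => [/andP[/eqP Ha /eqP Hy]|/andP[/andP[/andP[Ha Hy] /hasJ Hm1] /hasJ Hm2]].
    case: gs Hcg => [_|g gs /=]; last by rewrite Ha.
    by exists [::]; split => //; constructor.
  case: gs Hcg Ha => [<- //|g gs /= Hcg _].
  rewrite -Hcg hd_cons tl_cons in Hm1 Hm2.
  have Hev := GoodJ0 (G _ Hm1) erefl Hcv.
  have [ws [Hws Hevs]] := GoodJ1 (G _ Hm2) erefl Hcv.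
  exists (hd (jy j) :: ws); split; last by constructor.
  by rewrite /= Hws cons_eta.
Qed.
Opaque just.

Lemma valid_good s : valid s -> forall q, q \in s -> Good q.
Proof.
elim: s => // x s IH /andP[Hx Hs] q; rewrite in_cons => /orP[/eqP ->|]; last exact: IH.
apply: just_good Hx _; exact: IH.
Qed.

Definition Halts c v y := exists d, validc d && memc (J 0 c v y) d.

Lemma halts_sound p v y : Halts (code p) (cs v) y -> eval p v y.
Proof.
case=> d /andP[Hd Hm]; have [s Hs] := cs_surj d; subst d.
rewrite validc_cs in Hd; rewrite memc_cs in Hm.
exact: (GoodJ0 (valid_good Hd Hm)).
Qed.

Lemma i_and a b a' b' : a ==> a' -> b ==> b' -> (a && b) ==> (a' && b').
Proof. by case: a; case: b; case: a'; case: b'. Qed.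
Lemma i_or a b a' b' : a ==> a' -> b ==> b' -> (a || b) ==> (a' || b').
Proof. by case: a; case: b; case: a'; case: b'. Qed.
Lemma i_ball n P P' : (forall m, P m ==> P' m) -> ball n P ==> ball n P'.
Proof.
move=> H; apply/implyP => /ballP Hb; apply/ballP => m Hm.
exact: (implyP (H m) (Hb m Hm)).
Qed.

Transparent just.
Lemma just_mono (ex1 ex2 : (nat -> bool) -> bool) j :
  (forall Q Q', (forall q, Q q ==> Q' q) -> ex1 Q ==> ex2 Q') ->
  just ex1 j ==> just ex2 j.
Proof.
move=> Hex; rewrite /just.
repeat match goal with
 | |- is_true (?a ==> ?a) => exact: implybb
 | |- is_true ((_ && _) ==> (_ && _)) => apply: i_and
 | |- is_true ((_ || _) ==> (_ || _)) => apply: i_or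
 | |- is_true (ball _ _ ==> ball _ _) => apply: i_ball => ?
 | |- is_true (ex1 _ ==> ex2 _) => apply: (Hex _ _) => ?
 end.
Qed.

Lemma has_mono (s t : seq nat) : {subset s <= t} ->
  forall (Q Q' : nat -> bool), (forall q, Q q ==> Q' q) -> has Q s ==> has Q' t.
Proof.
move=> Hst Q Q' H; apply/implyP => /hasP [q Hq HQ]; apply/hasP; exists q; first exact: Hst.
exact: (implyP (H q) HQ).
Qed.

Lemma valid_cat s1 s2 : valid s1 -> valid s2 -> valid (s1 ++ s2).
Proof.
elim: s1 => //= x s1 IH /andP[Hx Hs1] Hs2; rewrite IH // andbT.
apply: (implyP (just_mono _ _) Hx) => Q Q'; apply: has_mono => q Hq.
by rewrite mem_cat Hq.
Qed.

Tactic Notation "pickr" int_or_var(k) := do k (apply/orP; left); apply/orP; right.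

Lemma JP t a b y : [/\ jt (J t a b y) = t, ja (J t a b y) = a, jb (J t a b y) = b & jy (J t a b y) = y].
Proof. exact: J_proj. Qed.

Lemma jtJ t a b y : jt (J t a b y) = t. Proof. by case: (JP t a b y). Qed.
Lemma jaJ t a b y : ja (J t a b y) = a. Proof. by case: (JP t a b y). Qed.
Lemma jbJ t a b y : jb (J t a b y) = b. Proof. by case: (JP t a b y). Qed.
Lemma jyJ t a b y : jy (J t a b y) = y. Proof. by case: (JP t a b y). Qed.
Ltac jsimp := rewrite ?jtJ ?jaJ ?jbJ ?jyJ.
Ltac pick0 := apply/orP; left; apply/andP; split; first by rewrite ?jtJ.


Section Intro.
Variable s : seq nat.
Notation ex := (fun Q => has Q s).

Lemma just_zero cv : just ex (J 0 (pr 0 0) cv 0).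
Proof. rewrite /just; jsimp; pick0; do 6 (apply/orP; left); by rewrite !eqxx. Qed.

Lemma just_succ x cv : just ex (J 0 (pr 1 0) (cons_ x cv) x.+1).
Proof. rewrite /just; jsimp; pick0; do 5 (apply/orP; left); apply/orP; right; by rewrite hd_cons !eqxx. Qed.

Lemma just_proj i cv : iter i tl cv != 0 -> just ex (J 0 (pr 2 i) cv (nthc i cv)).
Proof. move=> H; rewrite /just; jsimp; pick0; pickr 4; by rewrite p1_pr p2_pr H !eqxx. Qed.

Lemma just_comp cf cgs cv cws y : J 1 cgs cv cws \in s -> J 0 cf cws y \in s ->
  just ex (J 0 (pr 3 (pr cf cgs)) cv y).
Proof.
move=> H1 H2; rewrite /just; jsimp; pick0; pickr 3; rewrite p1_pr !p2_pr p1_pr eqxx /=.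
apply/hasP; exists (J 1 cgs cv cws) => //; jsimp; rewrite !eqxx /=.
by apply/hasP; exists (J 0 cf cws y).
Qed.

Lemma just_prec0 cf cg cv y : J 0 cf cv y \in s -> just ex (J 0 (pr 4 (pr cf cg)) (cons_ 0 cv) y).
Proof.
move=> H; rewrite /just; jsimp; pick0; pickr 2; rewrite p1_pr p2_pr p1_pr hd_cons tl_cons eqxx /=.
by apply/hasP; exists (J 0 cf cv y).
Qed.

Lemma just_precS cf cg k cv z y : J 0 (pr 4 (pr cf cg)) (cons_ k cv) z \in s ->
  J 0 cg (cons_ k (cons_ z cv)) y \in s -> just ex (J 0 (pr 4 (pr cf cg)) (cons_ k.+1 cv) y).
Proof.
move=> H1 H2; rewrite /just; jsimp; pick0; pickr 1; rewrite p1_pr !p2_pr hd_cons tl_cons eqxx /=.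
apply/hasP; exists (J 0 (pr 4 (pr cf cg)) (cons_ k cv) z) => //; jsimp; rewrite !eqxx /=.
by apply/hasP; exists (J 0 cg (cons_ k (cons_ z cv)) y).
Qed.

Lemma just_mu cf cv k : J 0 cf (cons_ k cv) 0 \in s ->
  (forall m, m < k -> exists r, J 0 cf (cons_ m cv) r.+1 \in s) ->
  just ex (J 0 (pr 5 cf) cv k).
Proof.
move=> H1 H2; rewrite /just; jsimp; pick0; apply/orP; right; rewrite p1_pr p2_pr eqxx /=.
apply/andP; split; first by apply/hasP; exists (J 0 cf (cons_ k cv) 0).
apply/ballP => m Hm; have [r Hr] := H2 m Hm.
by apply/hasP; exists (J 0 cf (cons_ m cv) r.+1) => //; jsimp; rewrite !eqxx.
Qed.

Lemma just_nil cv : just ex (J 1 0 cv 0).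
Proof. rewrite /just; jsimp; apply/orP; right; by rewrite !eqxx. Qed.

Lemma just_cons cg cgs cv w cws : J 0 cg cv w \in s -> J 1 cgs cv cws \in s ->
  just ex (J 1 (cons_ cg cgs) cv (cons_ w cws)).
Proof.
move=> H1 H2; rewrite /just; jsimp; apply/orP; right; apply/andP; split => //.
apply/orP; right; rewrite !hd_cons !tl_cons.
apply/andP; split; last by apply/hasP; exists (J 1 cgs cv cws).
apply/andP; split; last by apply/hasP; exists (J 0 cg cv w).
by [].
Qed.
End Intro.
Opaque just.

Lemma valid_cons j s : just (fun Q => has Q s) j -> valid s -> valid (j :: s).
Proof. by move=> H1 H2; rewrite /= H1 H2. Qed.

Lemma combine (P : nat -> nat -> Prop) k :
  (forall m, m < k -> exists r s, valid s /\ P m r /\ J 0 0 0 0 = J 0 0 0 0) -> True.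
Proof. done. Qed.

Lemma combine_ders (X : nat -> nat -> nat) k :
  (forall m, m < k -> exists r s, valid s /\ X m r \in s) ->
  exists S, valid S /\ forall m, m < k -> exists r, X m r \in S.
Proof.
elim: k => [|k IH] H; first by exists [::].
have [S [HS HS']] := IH (fun m Hm => H m (ltnW Hm)).
have [r [s [Hs Hr]]] := H k (ltnSn _).
exists (S ++ s); split; first exact: valid_cat.
move=> m; rewrite ltnS leq_eqVlt => /orP[/eqP->|Hm].
  by exists r; rewrite mem_cat Hr orbT.
by have [r' Hr'] := HS' m Hm; exists r'; rewrite mem_cat Hr'.
Qed.

Lemma complete_all :
  (forall p v y, eval p v y -> exists s, valid s /\ J 0 (code p) (cs v) y \in s) /\
  (forall gs v ws, evals gs v ws -> exists s, valid s /\ J 1 (cs (map code gs)) (cs v) (cs ws) \in s).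
Proof.
apply: eval_evals_ind2.
- move=> v; exists [:: J 0 (pr 0 0) (cs v) 0]; split; last exact: mem_head.
  by apply: valid_cons => //; apply: just_zero.
- move=> x v; exists [:: J 0 (pr 1 0) (cs (x :: v)) x.+1]; split; last exact: mem_head.
  by apply: valid_cons => //; apply: just_succ.
- move=> i v Hi; exists [:: J 0 (pr 2 i) (cs v) (nthc i (cs v))]; split.
    apply: valid_cons => //; apply: just_proj.
    by rewrite iter_tl_cs cs_eq0 -size_eq0 size_drop subn_eq0 -ltnNge.
  by rewrite nthc_cs mem_head.
- move=> f gs v ws y _ [s1 [Hs1 Hm1]] _ [s2 [Hs2 Hm2]].
  exists (J 0 (code (rComp f gs)) (cs v) y :: s1 ++ s2); split; last exact: mem_head.
  apply: valid_cons; last exact: valid_cat.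
  by apply: (@just_comp _ (code f) (cs (map code gs)) (cs v) (cs ws) y); rewrite mem_cat ?Hm1 ?Hm2 ?orbT.
- move=> f g v y _ [s1 [Hs1 Hm1]].
  exists (J 0 (code (rPrec f g)) (cs (0 :: v)) y :: s1); split; last exact: mem_head.
  by apply: valid_cons => //; apply: (@just_prec0 _ (code f) (code g) (cs v) y).
- move=> f g k v z y _ [s1 [Hs1 Hm1]] _ [s2 [Hs2 Hm2]].
  exists (J 0 (code (rPrec f g)) (cs (k.+1 :: v)) y :: s1 ++ s2); split; last exact: mem_head.
  apply: valid_cons; last exact: valid_cat.
  by apply: (@just_precS _ (code f) (code g) k (cs v) z y); rewrite mem_cat ?Hm1 ?Hm2 ?orbT.
- move=> f v k _ [s1 [Hs1 Hm1]] Hall.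
  have [S [HS HS']] := @combine_ders (fun m r => J 0 (code f) (cs (m :: v)) r.+1) k
    (fun m Hm => match Hall m Hm with ex_intro r (conj _ (ex_intro s Hs)) => ex_intro _ r (ex_intro _ s Hs) end).
  exists (J 0 (code (rMu f)) (cs v) k :: s1 ++ S); split; last exact: mem_head.
  apply: valid_cons; last exact: valid_cat.
  apply: (@just_mu _ (code f) (cs v) k); first by rewrite mem_cat Hm1.
  by move=> m Hm; have [r Hr] := HS' m Hm; exists r; rewrite mem_cat Hr orbT.
- move=> v; exists [:: J 1 0 (cs v) 0]; split; last exact: mem_head.
  by apply: valid_cons => //; apply: just_nil.
- move=> g gs v w ws _ [s1 [Hs1 Hm1]] _ [s2 [Hs2 Hm2]].
  exists (J 1 (cs (map code (g :: gs))) (cs v) (cs (w :: ws)) :: s1 ++ s2); split; last exact: mem_head.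
  apply: valid_cons; last exact: valid_cat.
  by apply: (@just_cons _ (code g) (cs (map code gs)) (cs v) w (cs ws)); rewrite mem_cat ?Hm1 ?Hm2 ?orbT.
Qed.

Lemma halts_complete p v y : eval p v y -> Halts (code p) (cs v) y.
Proof.
move=> H; have [s [Hs Hm]] := (proj1 complete_all) p v y H.
by exists (cs s); rewrite validc_cs memc_cs Hs Hm.
Qed.

Lemma halts_iff p v y : Halts (code p) (cs v) y <-> eval p v y.
Proof. split; [exact: halts_sound | exact: halts_complete]. Qed.

Ltac cstep_ext ::=
  match goal with
  | |- C _ (fun v => p1 _) => apply: C_p1
  | |- C _ (fun v => p2 _) => apply: C_p2
  | |- C _ (fun v => hd _) => apply: C_hd
  | |- C _ (fun v => tl _) => apply: C_tl
  | |- C _ (fun v => cons_ _ _) => apply: C_cons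
  | |- C _ (fun v => nthc _ _) => apply: C_nthc
  | |- C _ (fun v => iter _ tl _) => apply: C_iter_tl
  | |- C _ (fun v => nat_of_bool (memc _ _)) => apply: CB_memc
  | |- C _ (fun v => nat_of_bool (exlc _ _)) => apply: CB_exlc
  | |- C _ (fun v => nat_of_bool (justc _ _)) => apply: CB_justc
  end.

Lemma CB_validc k F : C k F -> CB k (fun v => validc (F v)).
Proof.
move=> HF; apply: (@C_op1 k (fun a => nat_of_bool (validc a))) => //.
rewrite /validc; cauto.
Qed.

Lemma C_cs_drop k m : m <= k -> C k (fun v => cs (drop (k - m) v)).
Proof.
elim: m => [_|m IH Hm].
  apply: C_ext (C_const k 0) => v Hv; by rewrite subn0 drop_oversize ?Hv.
have Hk : k - m.+1 < k by lia.
apply: C_ext (C_cons (C_proj Hk) (IH (ltnW Hm))) => v Hv.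
rewrite (drop_nth 0) ?Hv //=; congr cons_; congr cs; congr drop; lia.
Qed.

Lemma C_cs k : C k (fun v => cs v).
Proof. apply: C_ext (C_cs_drop (leqnn k)) => v _; by rewrite subnn drop0. Qed.

Lemma bound_ex (P : nat -> nat -> Prop) m :
  (forall x, x < m -> exists y, P x y) -> exists B, forall x, x < m -> exists2 y, y < B & P x y.
Proof.
elim: m => [|m IH] H; first by exists 0.
have [B HB] := IH (fun x Hx => H x (ltnW Hx)).
have [y Hy] := H m (ltnSn _).
exists (maxn B y.+1) => x; rewrite ltnS leq_eqVlt => /orP[/eqP->|Hx].
  by exists y => //; lia.
by have [y' Hy' Py'] := HB x Hx; exists y' => //; lia.
Qed.

Lemma choice_seq (P : nat -> rf -> Prop) m :
  (forall i, i < m -> exists p, P i p) -> exists ps : seq rf, size ps = m /\ forall i, i < m -> P i (nth rZero ps i).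
Proof.
elim: m => [|m IH] H; first by exists [::].
have [ps [Hs Hps]] := IH (fun i Hi => H i (ltnW Hi)).
have [p Hp] := H m (ltnSn _).
exists (rcons ps p); split; first by rewrite size_rcons Hs.
move=> i; rewrite ltnS leq_eqVlt nth_rcons Hs => /orP[/eqP->|Hi].
  by rewrite ltnn eqxx.
by rewrite Hi; apply: Hps.
Qed.

Lemma eval_bool p (R : seq nat -> bool) v :
  eval p v (nat_of_bool (R v)) -> (R v <-> Halts (code p) (cs v) 1).
Proof.
move=> H; rewrite halts_iff; split => [HR|H1]; first by rewrite HR in H.
by have := eval_det H H1; case: (R v).
Qed.

Definition cs4 a b c d := cons_ a (cons_ b (cons_ c (cons_ d 0))).
Lemma cs4E a b c d : cs4 a b c d = cs [:: a; b; c; d]. Proof. by []. Qed.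

Definition edge e cv t s a b :=
  ball t (fun u => bex s (fun w => bex s (fun d =>
     validc d && memc (J 0 e (cs4 (nthc a cv) (nthc b cv) u w) 1) d))).
Definition edgeS e cv t s a b := edge e cv t s a b || edge e cv t s b a.

Lemma edge_mono e cv t s s' a b : s <= s' -> edge e cv t s a b -> edge e cv t s' a b.
Proof.
move=> Hs /ballP H; apply/ballP => u Hu; have /bexP [w Hw /bexP [d Hd Hx]] := H u Hu.
apply/bexP; exists w; first lia; apply/bexP; exists d => //; lia.
Qed.

Lemma edgeS_mono e cv t s s' a b : s <= s' -> edgeS e cv t s a b -> edgeS e cv t s' a b.
Proof. by move=> Hs /orP[H|H]; apply/orP; [left|right]; apply: edge_mono H. Qed.

Lemma edgeS_sym e cv t s a b : edgeS e cv t s a b = edgeS e cv t s b a.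
Proof. by rewrite /edgeS orbC. Qed.

Lemma edgeP e cv t s a b : edge e cv t s a b <->
  forall u, u < t -> exists w d, [/\ w < s, d < s & validc d && memc (J 0 e (cs4 (nthc a cv) (nthc b cv) u w) 1) d].
Proof.
split => [/ballP H u Hu|H].
  have /bexP [w Hw /bexP [d Hd Hx]] := H u Hu; by exists w, d.
apply/ballP => u Hu; have [w [d [Hw Hd Hx]]] := H u Hu.
by apply/bexP; exists w => //; apply/bexP; exists d.
Qed.

Section E.
Variable n : nat.

Definition pathok e cv t s i c j :=
  (c != 0) && (hd c == i) && ball c (fun k => (iter k tl c != 0) ==>
    ((nthc k c < n) && ((iter k.+1 tl c != 0) ==> edgeS e cv t s (nthc k c) (nthc k.+1 c))
       && ((iter k.+1 tl c == 0) ==> (nthc k c == j)))).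

Lemma iter_cs_ne0 k s : (iter k tl (cs s) != 0) = (k < size s).
Proof. by rewrite iter_tl_cs cs_eq0 -size_eq0 size_drop subn_eq0 -ltnNge. Qed.

Lemma iter_cs_eq0 k s : (iter k tl (cs s) == 0) = (size s <= k).
Proof. by rewrite iter_tl_cs cs_eq0 -size_eq0 size_drop subn_eq0. Qed.

Lemma pathokE e cv t s i x l j :
  pathok e cv t s i (cs (x :: l)) j =
  [&& x == i, all (fun a => a < n) (x :: l), path (edgeS e cv t s) x l & last x l == j].
Proof.
have E0 : cs (x :: l) != 0 := cons_neq0 _ _.
have E1 : hd (cs (x :: l)) = x := hd_cons _ _.
rewrite /pathok E0 E1 andTb.
case: (x == i); rewrite ?andTb ?andFb //.
have Hsz := size_le_cs (x :: l).
apply/ballP/and3P => [H|[Ha Hp Hl] k Hk].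
- have H' : forall k, k < (size l).+1 ->
     [&& nth 0 (x :: l) k < n, (k < size l) ==> edgeS e cv t s (nth 0 (x :: l) k) (nth 0 (x :: l) k.+1)
       & (k == size l) ==> (nth 0 (x :: l) k == j)].
    move=> k Hk; have := H k (leq_trans Hk Hsz).
    rewrite !iter_cs_ne0 iter_cs_eq0 !nthc_cs Hk implyTb => /andP[/andP[H1 H2] H3].
    rewrite H1 /=; apply/andP; split.
      by apply/implyP => Hk'; exact: (implyP H2 Hk').
    by apply/implyP => /eqP Hk'; apply: (implyP H3); rewrite Hk' /=.
  split.
  + apply/(all_nthP 0) => k Hk; by case/and3P: (H' k Hk).
  + apply/(pathP 0) => k Hk; case/and3P: (H' k (ltnW Hk)) => _ /implyP /(_ Hk) //.
  + rewrite -(last_cons 0) -nth_last /=; case/and3P: (H' (size l) (ltnSn _)) => _ _.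
    by rewrite eqxx.
- apply/implyP; rewrite !iter_cs_ne0 iter_cs_eq0 !nthc_cs => Hk'.
  apply/andP; split; first apply/andP; first split.
  + by apply: (all_nthP 0 Ha).
  + apply/implyP => Hk1; rewrite /= in Hk1.
    have := (pathP 0 Hp) k (ltac:(lia)); by rewrite [nth 0 (x :: l) k.+1]/=.
  + apply/implyP => Hk1; rewrite /= in Hk1.
    have -> : k = size l by rewrite /= in Hk'; lia.
    by rewrite -[size l]/((size (x :: l)).-1) nth_last /=.
Qed.

Lemma pathok_ne0 e cv t s i c j : pathok e cv t s i c j -> c != 0.
Proof. by case/andP => /andP[]. Qed.

Definition Eb x y t W := (x == y) || ((p1 x == p1 y) && (p2 x < n) && (p2 y < n) &&
  pathok (p1 (p1 x)) (p2 (p1 x)) t (p1 W) (p2 x) (p2 W) (p2 y)).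

Definition E x y := forall t, exists W, Eb x y t W.

Lemma CB_pathok k E CV TT S I Cc Jj : C k E -> C k CV -> C k TT -> C k S -> C k I -> C k Cc -> C k Jj ->
  CB k (fun v => pathok (E v) (CV v) (TT v) (S v) (I v) (Cc v) (Jj v)).
Proof.
move=> HE HCV HT HS HI HC HJ.
have := @C_comp k 7 (fun v => nat_of_bool (pathok (nth 0 v 0) (nth 0 v 1) (nth 0 v 2) (nth 0 v 3) (nth 0 v 4) (nth 0 v 5) (nth 0 v 6)))
  [:: E; CV; TT; S; I; Cc; Jj] erefl.
apply => //.
rewrite /pathok /edgeS /edge /cs4 /J.
repeat (first [ apply: CB_validc | rewrite /CB; cstep ]).
Qed.

Lemma CB_Eb : C 4 (fun v => nat_of_bool (Eb (nth 0 v 0) (nth 0 v 1) (nth 0 v 2) (nth 0 v 3))).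
Proof.
rewrite /Eb; repeat (first [ apply: CB_pathok | rewrite /CB; cstep ]).
Qed.

Lemma Pi02_E : Pi02 E.
Proof. by exists Eb; split; [exact: CB_Eb | move=> x y]. Qed.

Definition PS e cv t s i j := exists x l,
  [&& x == i, all (fun a => a < n) (x :: l), path (edgeS e cv t s) x l & last x l == j].

Lemma Eb_PS x y t : (exists W, Eb x y t W) <->
  x = y \/ [/\ p1 x = p1 y, p2 x < n, p2 y < n & exists s, PS (p1 (p1 x)) (p2 (p1 x)) t s (p2 x) (p2 y)].
Proof.
split.
- case=> W /orP[/eqP->|/andP[/andP[/andP[/eqP H1 H2] H3] Hp]]; first by left.
  right; split => //; exists (p1 W).
  have [c Hc] := cs_surj (p2 W); move: Hp; rewrite -Hc.
  case: c Hc => [|x0 l] Hc Hp; first by have := pathok_ne0 Hp.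
  by exists x0, l; rewrite pathokE in Hp.
- case=> [->|[H1 H2 H3 [s [x0 [l Hp]]]]]; first by exists 0; rewrite /Eb eqxx.
  exists (pr s (cs (x0 :: l))); apply/orP; right.
  apply/andP; split; last by rewrite p1_pr p2_pr pathokE.
  by rewrite H1 eqxx H2 H3.
Qed.

Lemma PS_refl e cv t s i : i < n -> PS e cv t s i i.
Proof. by move=> Hi; exists i, [::]; rewrite /= eqxx Hi. Qed.

Lemma PS_sym e cv t s i j : PS e cv t s i j -> PS e cv t s j i.
Proof.
case=> x [l /and4P[/eqP Hx Ha Hp /eqP Hl]].
have Hr : last x l :: rev (belast x l) = rcons (rev l) x.
  by rewrite -rev_rcons -lastI rev_cons.
exists (last x l), (rev (belast x l)); apply/and4P; split.
- by rewrite Hl.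
- by rewrite Hr -rev_cons all_rev.
- rewrite rev_path; apply: sub_path Hp => a b; by rewrite edgeS_sym.
- by rewrite -(last_cons 0) Hr last_rcons Hx.
Qed.

Lemma PS_trans e cv t s s' i j k : PS e cv t s i j -> PS e cv t s' j k -> PS e cv t (maxn s s') i k.
Proof.
case=> x [l /and4P[/eqP Hx Ha /= Hp /eqP Hl]] [x' [l' /and4P[/eqP Hx' Ha' /= Hp' /eqP Hl']]].
exists x, (l ++ l'); apply/and4P; split.
- by rewrite Hx.
- move: Ha Ha'; rewrite /= all_cat => /andP[-> ->] /andP[_ ->] //.
- rewrite cat_path; apply/andP; split.
    apply: sub_path Hp => a b; apply: edgeS_mono; exact: leq_maxl.
  rewrite Hl -Hx'; apply: sub_path Hp' => a b; apply: edgeS_mono; exact: leq_maxr.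
- by rewrite last_cat Hl -Hx' Hl'.
Qed.
End E.

Lemma E_equiv n : is_equivalence (E n).
Proof.
split; [|split].
- by move=> x t; exists 0; rewrite /Eb eqxx.
- move=> x y H t; have /Eb_PS [->|[H1 H2 H3 [s Hs]]] := H t; apply/Eb_PS; first by left.
  right; split; [by rewrite H1 | by [] | by [] | exists s; rewrite -H1; exact: PS_sym Hs].
- move=> x y z H1 H2 t.
  have /Eb_PS [E1|[A1 B1 C1 [s1 P1]]] := H1 t; first by subst.
  have /Eb_PS [E2|[A2 B2 C2 [s2 P2]]] := H2 t; first by subst; apply/Eb_PS; right; split => //; exists s1.
  apply/Eb_PS; right; split => //; first by rewrite A1 A2.
  exists (maxn s1 s2); apply: PS_trans P1 _; by rewrite A1.
Qed.

Section Red.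
Variables (n : nat) (F : nat -> nat -> Prop) (R : nat -> nat -> nat -> nat -> bool) (p : rf) (v : seq nat).
Hypothesis Hp : forall w, size w = 4 -> eval p w (nat_of_bool (R (nth 0 w 0) (nth 0 w 1) (nth 0 w 2) (nth 0 w 3))).

Lemma R_halts a b u w : R a b u w <-> Halts (code p) (cs4 a b u w) 1.
Proof.
rewrite cs4E; have H := @eval_bool p (fun w => R (nth 0 w 0) (nth 0 w 1) (nth 0 w 2) (nth 0 w 3)) [:: a; b; u; w] (@Hp [:: a; b; u; w] erefl).
exact H.
Qed.

Lemma edge_sem t s a b : edge (code p) (cs v) t s a b ->
  forall u, u < t -> exists w, R (nth 0 v a) (nth 0 v b) u w.
Proof.
move=> /edgeP H u Hu; have [w [d [_ _ Hd]]] := H u Hu.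
exists w; apply/R_halts; exists d; by rewrite -!nthc_cs.
Qed.

Lemma edge_intro t a b : (forall u, exists w, R (nth 0 v a) (nth 0 v b) u w) ->
  exists s, edge (code p) (cs v) t s a b.
Proof.
move=> H.
have H' : forall u, u < t -> exists y, exists w d, y = maxn w d /\
   validc d && memc (J 0 (code p) (cs4 (nthc a (cs v)) (nthc b (cs v)) u w) 1) d.
  move=> u _; have [w Hw] := H u; have /R_halts [d Hd] := Hw.
  by exists (maxn w d), w, d; rewrite !nthc_cs.
have [B HB] := bound_ex H'.
exists B; apply/edgeP => u Hu; have [y Hy [w [d [Hwd Hx]]]] := HB u Hu.
exists w, d; split => //; lia.
Qed.
End Red.

Lemma path_G (G : nat -> nat -> Prop) (rel : nat -> nat -> bool) i x l :
  (forall a b, rel a b -> G a b) -> (forall a b c, G a b -> G b c -> G a c) ->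
  G i x -> path rel x l -> G i (last x l).
Proof.
move=> Hr Ht; elim: l x => //= y l IH x Hix /andP[Hxy Hp].
apply: IH Hp; exact: Ht Hix (Hr _ _ Hxy).
Qed.

Lemma E_complete n F : is_equivalence F -> Pi02 F -> creduces_n n F (E n).
Proof.
move=> [Fr [Fs Ft]] [R [[p Hp] HR]].
exists (fun i v => pr (pr (code p) (cs v)) i); split.
  move=> i _; apply: C_pr; [apply: C_pr; [exact: C_const | exact: C_cs] | exact: C_const].
move=> v Hv i j Hij Hjn.
have Hin : i < n by lia.
have Hne : pr (pr (code p) (cs v)) i <> pr (pr (code p) (cs v)) j.
  by move/pr_inj => [_ E]; move: Hij; rewrite E ltnn.
have HE : E n (pr (pr (code p) (cs v)) i) (pr (pr (code p) (cs v)) j) <->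
          forall t, exists s, PS n (code p) (cs v) t s i j.
  split => H t.
    have /Eb_PS [//|[_ _ _]] := H t.
    by rewrite !p1_pr !p2_pr.
  apply/Eb_PS; right; rewrite !p1_pr !p2_pr; split => //; exact: H.
rewrite HE; set G := fun a b => F (nth 0 v a) (nth 0 v b).
have HRG a b : G a b <-> forall u, exists w, R (nth 0 v a) (nth 0 v b) u w by exact: HR.
split.
- move=> Hij' t.
  have [s Hs] := @edge_intro R p v Hp t i j (proj1 (HRG i j) Hij').
  by exists s, i, [:: j]; rewrite /= eqxx Hin Hjn /edgeS Hs eqxx.
- move=> H.
  have Hb1 : forall a, a < n -> exists T, forall b, b < n -> ~ G a b ->
      exists2 u, u < T & forall w, ~~ R (nth 0 v a) (nth 0 v b) u w.
    move=> a Ha.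
    have H1 : forall b, b < n -> exists u, ~ G a b -> forall w, ~~ R (nth 0 v a) (nth 0 v b) u w.
      move=> b _; case: (classic (G a b)) => HG; first by exists 0.
      have : ~ forall u, exists w, R (nth 0 v a) (nth 0 v b) u w by rewrite -HRG.
      move/not_all_ex_not => [u Hu]; exists u => _ w; apply/negP => Hw; apply: Hu; by exists w.
    have [T HT] := bound_ex H1; exists T => b Hb HG.
    have [u Hu Hu'] := HT b Hb; exists u => //; exact: Hu'.
  have [T HT] := bound_ex Hb1.
  have [s [x [l /and4P[/eqP Hx Hall Hpth /eqP Hl]]]] := H T.
  have Hedge : forall a b, a < n -> b < n -> edge (code p) (cs v) T s a b -> G a b.
    move=> a b Ha Hb He; apply: NNPP => HG.
    have [T' HT' HT''] := HT a Ha.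
    have [u Hu Hw] := HT'' b Hb HG.
    have [w Hw'] := @edge_sem R p v Hp T s a b He u (ltac:(lia)).
    by move: (Hw w); rewrite Hw'.
  have Hg : forall y l', all (fun a => a < n) (y :: l') -> path (edgeS (code p) (cs v) T s) y l' ->
      G i y -> G i (last y l').
    move=> y l'; elim: l' y => [|z l' IH] y //= /andP[Hy /andP[Hz Hl']] /andP[He Hp'] Hiy.
    apply: IH; [by rewrite /= Hz Hl' | exact: Hp' | ].
    apply: Ft Hiy _; case/orP: He => He.
      exact: Hedge He.
    apply: Fs; exact: Hedge He.
  rewrite -Hl; apply: Hg => //; rewrite Hx; exact: Fr.
Qed.

Fixpoint Vs c m := if m is m'.+1 then pr c m' :: Vs c m' else [::].
Definition Vc c m := cs (Vs c m).

Lemma size_Vs c m : size (Vs c m) = m. Proof. by elim: m => //= m ->. Qed.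
Lemma nth_Vs c m k : k < m -> nth 0 (Vs c m) k = pr c (m.-1 - k).
Proof.
elim: m k => // m IH [|k] Hk /=; first by rewrite subn0.
rewrite IH //; case: m IH Hk => // m _ Hk; congr pr; lia.
Qed.

Lemma C_Vc k F m : C k F -> C k (fun v => Vc (F v) m).
Proof.
move=> HF; elim: m => [|m IH]; first exact: C_const.
exact: C_cons (C_pr HF (C_const _ _)) IH.
Qed.

Section F.
Variable n : nat.

Definition ColChk c W :=
  validc (p1 W) && ball n.+1 (fun k => memc (J 0 (nthc k c) (Vc c n.+1) (nthc k (p2 W))) (p1 W))
  && ball n.+1 (fun k => ball n.+1 (fun l => (k < l) ==> (nthc k (p2 W) != nthc l (p2 W)))).

Definition Fb x y (u : nat) W := (x == y) || ((p1 x == p1 y) && ColChk (p1 x) W).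
Definition Fd x y := forall u, exists W, Fb x y u W.

Lemma FdE x y : Fd x y <-> x = y \/ (p1 x = p1 y /\ exists W, ColChk (p1 x) W).
Proof.
split.
  move=> /(_ 0) [W /orP[/eqP ->|/andP[/eqP H1 H2]]]; [by left | by right; split => //; exists W].
case=> [-> u|[H1 [W HW]] u]; first by exists 0; rewrite /Fb eqxx.
by exists W; rewrite /Fb H1 eqxx -H1 HW orbT.
Qed.

Lemma Fd_equiv : is_equivalence Fd.
Proof.
split; [|split].
- by move=> x; apply/FdE; left.
- move=> x y /FdE [->|[H1 H2]]; apply/FdE; [by left | right; split => //; by rewrite -H1].
- move=> x y z /FdE [->|[H1 H2]] // /FdE [<-|[H3 H4]]; apply/FdE; right; first by split.
  by split => //; rewrite H1.
Qed.

Lemma CB_ColChk : C 2 (fun v => nat_of_bool (ColChk (nth 0 v 0) (nth 0 v 1))).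
Proof.
rewrite /ColChk /J.
repeat (first [ apply: CB_validc | apply: C_Vc | rewrite /CB; cstep ]).
Qed.

Lemma Fd_Pi02 : Pi02 Fd.
Proof.
exists Fb; split => //; rewrite /Fb.
repeat (first [ apply: (@C_op2 4 (fun a b => nat_of_bool (ColChk a b)) _ _ CB_ColChk) | rewrite /CB; cstep ]).
Qed.
End F.

Lemma E_inv n x y : E n x y -> x = y \/ [/\ p1 x = p1 y, p2 x < n & p2 y < n].
Proof.
move=> H; have /Eb_PS [->|[H1 H2 H3 _]] := H 0; [by left | by right].
Qed.

Lemma not_complete n : 0 < n -> ~ complete_n n.+1 (E n).
Proof.
move=> Hn [_ Hc].
have [f [Hf Hred]] := Hc (Fd n) (Fd_equiv n) (Fd_Pi02 n).
have [ps [Hps Hps']] := @choice_seq (fun i p => forall v, size v = n.+1 -> eval p v (f i v)) n.+1 Hf.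
set c := cs (map code ps).
set V := Vs c n.+1.
have HV : size V = n.+1 by rewrite size_Vs.
have HVk : forall k, k < n.+1 -> nth 0 V k = pr c (n - k) by move=> k Hk; rewrite nth_Vs.
have Hc_k : forall k, k < n.+1 -> nthc k c = code (nth rZero ps k).
  by move=> k Hk; rewrite nthc_cs (nth_map rZero) ?Hps.
have Hev : forall k, k < n.+1 -> eval (nth rZero ps k) V (f k V) by move=> k Hk; apply: Hps'.
case: (classic (exists W, ColChk n c W)) => [[W HW]|HnW].
- (* all outputs E-related and pairwise distinct *)
  have HW0 := HW; case/andP: HW => /andP[Hd /ballP Hm] /ballP Hdist.
  have Hfk : forall k, k < n.+1 -> f k V = nthc k (p2 W).
    move=> k Hk; apply: eval_det (Hev k Hk) _; apply: halts_sound.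
    exists (p1 W); rewrite Hd -(Hc_k k Hk) andTb; move: (Hm k Hk). rewrite /Vc -/V. exact.
  have HE : forall k l, k < l -> l < n.+1 -> E n (f k V) (f l V).
    move=> k l Hkl Hl; apply/(Hred V HV k l Hkl Hl)/FdE; right.
    have Hk' : k < n.+1 by lia.
    rewrite (HVk k Hk') (HVk l Hl) !p1_pr; split => //; by exists W.
  have Hne : forall k l, k < l -> l < n.+1 -> f k V <> f l V.
    move=> k l Hkl Hl; have Hk' : k < n.+1 by lia.
    rewrite (Hfk k Hk') (Hfk l Hl).
    by apply/eqP; have := Hdist k (ltac:(lia)); move/ballP/(_ l Hl); rewrite Hkl.
  have Hinfo : forall k l, k < l -> l < n.+1 -> [/\ p1 (f k V) = p1 (f l V), p2 (f k V) < n & p2 (f l V) < n].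
    move=> k l Hkl Hl; case: (E_inv (HE k l Hkl Hl)) => // Heq; by have := Hne k l Hkl Hl.
  have Hlt : forall k, k < n.+1 -> p2 (f k V) < n.
    move=> k Hk; case: k Hk => [|k] Hk; first by case: (Hinfo 0 1 isT (ltac:(lia))).
    by case: (Hinfo 0 k.+1 isT Hk).
  have Hp1 : forall k, k < n.+1 -> p1 (f k V) = p1 (f 0 V).
    move=> k Hk; case: k Hk => // k Hk; by case: (Hinfo 0 k.+1 isT Hk).
  set S := [seq p2 (f k V) | k <- iota 0 n.+1].
  have HS : uniq S.
    rewrite map_inj_in_uniq ?iota_uniq // => k l; rewrite !mem_iota => Hk Hl Heq.
    have {}Hk : k < n.+1 by lia.
    have {}Hl : l < n.+1 by lia.
    have Hfeq : f k V = f l V by rewrite -(pr_p (f k V)) -(pr_p (f l V)) Heq (Hp1 k Hk) (Hp1 l Hl).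
    case: (ltngtP k l) => // Hkl'.
      by have := Hne k l Hkl' Hl Hfeq.
    by have := Hne l k Hkl' Hk (esym Hfeq).
  have := uniq_leq_size HS (s2 := iota 0 n).
  rewrite size_map !size_iota => H; have : n.+1 <= n; last lia.
  apply: H => x /mapP [k]; rewrite mem_iota /= add0n => Hk ->; rewrite mem_iota /=; exact: Hlt.
- (* some collision *)
  have [S [HSv HS]] := @combine_ders (fun k _ => J 0 (nthc k c) (cs V) (f k V)) n.+1
    (fun k Hk => match (proj1 complete_all) _ _ _ (Hev k Hk) with
                 | ex_intro s Hs => ex_intro _ 0 (ex_intro _ s (match Hs with conj a b => conj a (eq_rect _ (fun z => J 0 z (cs V) (f k V) \in s) b _ (esym (Hc_k k Hk))) end)) end).
  set Y := cs [seq f k V | k <- iota 0 n.+1].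
  have HY : forall k, k < n.+1 -> nthc k Y = f k V.
    by move=> k Hk; rewrite nthc_cs (nth_map 0) ?size_iota // nth_iota.
  have [k [l [Hkl [Hl Heq]]]] : exists k l, [/\ k < l, l < n.+1 & f k V = f l V].
    apply: NNPP => Hno; apply: HnW; exists (pr (cs S) Y); rewrite /ColChk p1_pr p2_pr validc_cs HSv /=.
    apply/andP; split.
      apply/ballP => k Hk; rewrite HY // memc_cs; have [r Hr] := HS k Hk; exact: Hr.
    apply/ballP => k Hk; apply/ballP => l Hl; apply/implyP => Hkl.
    rewrite !HY //; apply/eqP => Heq; apply: Hno; by exists k, l.
  have HE : E n (f k V) (f l V) by rewrite Heq; case: (E_equiv n) => Hr _; apply: Hr.
  move/(Hred V HV k l Hkl Hl)/FdE: HE => [|[_ HW]].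
    have Hk' : k < n.+1 by lia.
    rewrite (HVk k Hk') (HVk l Hl); move/pr_inj => [_ Hkl']; lia.
  have Hk' : k < n.+1 by lia.
  apply: HnW; by rewrite (HVk k Hk') p1_pr in HW.
Qed.


Theorem theorem4p8 :
  forall n : nat, 1 < n ->
    exists E : nat -> nat -> Prop,
      is_equivalence E /\ Pi02 E /\ complete_n n E /\ ~ complete_n n.+1 E.
Proof.
move=> n Hn; exists (E n); split; first exact: E_equiv.
split; first exact: Pi02_E.
split; first by split; [exact: Pi02_E | move=> F HF HP; exact: E_complete].
apply: not_complete; lia.
Qed.
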